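(* Let $U\in\mathcal U_n$ with order $\prec$, let $w=q(U)$ and let $f=f_U$ be the associated permutation. Define $\prec_f$ on $\{1,\dots,n\}$ by $i\prec_f j$ iff $f^{-1}(i)\prec_{P(w)}f^{-1}(j)$. Then $\prec_f$ coincides with $\prec$.
   Context: A unit interval order on $\{1,\dots,n\}$ is a relation $\prec$ such that there are closed intervals $I_1,\dots,I_n$ of length $1$ in $\mathbb R$, numbered from left to right, with $i\prec j$ iff $I_i$ lies strictly to the left of $I_j$; $\mathcal U_n$ is the set of these. For a sequence $w=(w_1,\dots,w_n)$ of nonnegative integers, $P(w)$ is the poset on $\{1,\dots,n\}$ with order $\prec_{P(w)}$: $i\prec_{P(w)} j$ iff $w_j-w_i\ge2$, or $w_j-w_i=1$ and $i<j$. Levels: $\ell(1)=0$ and $\ell(j)=\max_{i\prec j}\ell(i)+1$ for $j\ge2$, with $\ell(j)=0$ if no $i\prec j$. Algorithm: $q_1=(0)$; given $q_{i-1}$, let $C_i$ be the number of $k\prec i$ with $\ell(k)=\ell(i)-1$, and obtain $q_i$ by inserting a letter $\ell(i)$ into $q_{i-1}$ directly after the (possibly empty) run of letters $\ell(i)$ immediately following the $C_i$-th occurrence of the letter $\ell(i)-1$ (the 0-th occurrence meaning the start of the word); $q(U)=q_n$. The permutation $f_U$ of $\{1,\dots,n\}$: with $w=q(U)$, number the positions $i$ with $w_i=0$ from left to right starting at $1$, then continue numbering the positions with $w_i=1$ from left to right, then those with $w_i=2$, and so on; $f_U(i)$ is the number assigned to position $i$. *)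

(* Defs.v *)
From Stdlib Require Import Reals.
From mathcomp Require Import all_boot.
Set Implicit Arguments. Unset Strict Implicit. Unset Printing Implicit Defensive.

(* Elements are 1..n (nat); relations are boolean relations on nat,
   only their values on {1..n} matter. *)

(* prec is a unit interval order on {1,...,n}: there are unit intervals
   I_i = [a i, a i + 1], numbered from left to right (a nondecreasing),
   with i prec j iff I_i lies strictly to the left of I_j. *)
Definition is_unit_interval_order (n : nat) (prec : rel nat) : Prop :=
  exists a : nat -> R,
    (forall i j, 1 <= i -> i <= j -> j <= n -> Rle (a i) (a j)) /\
    (forall i j, 1 <= i <= n -> 1 <= j <= n ->
       (prec i j <-> Rlt (Rplus (a i) R1) (a j))).

(* levels: levs prec k = [:: l(1); ...; l(k)].  Since i prec j forces i < j
   in a unit interval order, the max over predecessors ranges over i < j. *)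
Fixpoint levs (prec : rel nat) (k : nat) : seq nat :=
  match k with
  | 0 => [::]
  | k'.+1 =>
      let L := levs prec k' in
      rcons L (\max_(i <- iota 1 k' | prec i k'.+1) (nth 0 L i.-1).+1)
  end.

Definition level (n : nat) (prec : rel nat) (j : nat) : nat :=
  nth 0 (levs prec n) j.-1.

(* occ_end a c q = length of the shortest prefix of q containing c
   occurrences of a (0 when c = 0: the start of the word). *)
Fixpoint occ_end (a c : nat) (q : seq nat) : nat :=
  if c == 0 then 0 else
  match q with
  | [::] => 0
  | x :: q' => (occ_end a (c - (x == a)) q').+1
  end.

(* insert letter l directly after the (possibly empty) run of letters l
   immediately following the c-th occurrence of letter l-1 *)
Definition insert_step (q : seq nat) (l c : nat) : seq nat :=
  let p0 := occ_end l.-1 c q in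
  let p := p0 + find (predC1 l) (drop p0 q) in
  take p q ++ l :: drop p q.

Definition Ccount (n : nat) (prec : rel nat) (i : nat) : nat :=
  count (fun k => prec k i && (level n prec k == (level n prec i).-1)) (iota 1 n).

(* q_i for i = 0..n, with q_0 = [::] (so that q_1 = [:: 0]). *)
Definition qword_upto (n : nat) (prec : rel nat) (m : nat) : seq nat :=
  foldl (fun q i => insert_step q (level n prec i) (Ccount n prec i)) [::] (iota 1 m).

Definition qword (n : nat) (prec : rel nat) : seq nat := qword_upto n prec n.

(* w_i, 1-based *)
Definition wat (w : seq nat) (i : nat) : nat := nth 0 w i.-1.

Definition Pw (w : seq nat) : rel nat :=
  fun i j => (wat w i + 2 <= wat w j) || ((wat w j == (wat w i).+1) && (i < j)).

(* f_U(i): positions with letter 0 are numbered first from left to right,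
   then those with letter 1, etc.  So f(i) = #{k | w_k < w_i} +
   #{k <= i | w_k = w_i}. *)
Definition fperm (w : seq nat) (i : nat) : nat :=
  count (fun x => x < wat w i) w + count (pred1 (wat w i)) (take i w).

Definition fU (n : nat) (prec : rel nat) : nat -> nat := fperm (qword n prec).

Definition finvU (n : nat) (f : nat -> nat) (i : nat) : nat :=
  (find (fun a => f a == i) (iota 1 n)).+1.

(* Main.v *)
Require Import Defs.
From Stdlib Require Import Reals Lra.
From mathcomp Require Import all_boot.
Set Implicit Arguments. Unset Strict Implicit. Unset Printing Implicit Defensive.

Section Main.
Variable n : nat.
Variable prec : rel nat.
Hypothesis H1 : forall i j, 1 <= i <= n -> 1 <= j <= n -> prec i j -> i < j.
Hypothesis H2 : forall i i' j, 1 <= i' -> i' <= i -> i <= n -> 1 <= j <= n ->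
  prec i j -> prec i' j.
Hypothesis H3 : forall i j j', 1 <= i <= n -> 1 <= j -> j <= j' -> j' <= n ->
  prec i j -> prec i j'.

Local Notation lv := (level n prec).

Lemma size_levs k : size (levs prec k) = k.
Proof. by elim: k => //= k IH; rewrite size_rcons IH. Qed.

Lemma nth_levs k m i : k <= m -> i < k -> nth 0 (levs prec m) i = nth 0 (levs prec k) i.
Proof.
elim: m => [|m IH]; first by rewrite leqn0 => /eqP ->.
rewrite leq_eqVlt => /orP [/eqP -> //|]; rewrite ltnS => km ik.
by rewrite /= nth_rcons size_levs (leq_trans ik km) IH.
Qed.

Lemma levelE j : 1 <= j <= n ->
  lv j = \max_(i <- iota 1 j.-1 | prec i j) (lv i).+1.
Proof.
case: j => // k /andP [_ kn].
rewrite /level /= (nth_levs kn (ltnSn k)) /= nth_rcons size_levs ltnn eqxx.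
rewrite big_seq_cond [RHS]big_seq_cond; apply: eq_bigr => i /andP [+ _].
rewrite mem_iota => /andP [i1 ik].
rewrite (@nth_levs k n); first by [].
  by apply: leq_trans (ltnW kn).
by case: i i1 ik => // i _; rewrite add1n ltnS.
Qed.

Lemma lv_mono i j : 1 <= i -> i <= j -> j <= n -> lv i <= lv j.
Proof.
move=> i1 ij jn.
have i1n : 1 <= i <= n by rewrite i1 (leq_trans ij jn).
have j1n : 1 <= j <= n by rewrite (leq_trans i1 ij) jn.
rewrite (levelE i1n) (levelE j1n).
apply/bigmax_leqP_seq => k; rewrite mem_iota => /andP [k1 ki] pk.
apply: leq_bigmax_seq; last by apply: H3 pk => //; rewrite k1 /=;
  apply: leq_trans (ltnW ki) _; case: (i) i1n ij => // i' _; rewrite add1n.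
rewrite mem_iota k1 /=; apply: leq_trans ki _.
by case: (i) (j) i1 ij j1n => [|i'] [|j'] //.
Qed.


Lemma lv_prec i j : 1 <= i <= n -> 1 <= j <= n -> prec i j -> lv i < lv j.
Proof.
move=> i1n j1n pij; rewrite (levelE j1n).
apply: (leq_bigmax_seq i _ pij); rewrite mem_iota; case/andP: (i1n) => -> _ /=.
by have := H1 i1n j1n pij; case: (j) => // j'; rewrite add1n.
Qed.

Lemma lv_noprec i j : 1 <= i <= n -> 1 <= j <= n -> ~~ prec i j -> lv j <= (lv i).+1.
Proof.
move=> /andP [i1 iN] j1n npij; rewrite (levelE j1n).
apply/bigmax_leqP_seq => k; rewrite mem_iota => /andP [k1 kj] pk.
rewrite ltnS; apply: lv_mono => //.
have kn : k <= n by apply: leq_trans (ltnW kj) _; case/andP: j1n; case: (j) => // j' _; rewrite add1n.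
rewrite leqNgt; apply/negP => ik; move/negP: npij; apply.
by apply: (H2 (i:=k)) => //; apply: ltnW.
Qed.

Lemma lv_nopred j : 1 <= j <= n -> (forall k, 1 <= k <= n -> ~~ prec k j) -> lv j = 0.
Proof.
move=> j1n H; apply/eqP; rewrite -leqn0 (levelE j1n).
apply/bigmax_leqP_seq => k; rewrite mem_iota => /andP [k1 kj] pk.
have kn : k <= n by apply: leq_trans (ltnW kj) _; case/andP: j1n; case: (j) => // j' _; rewrite add1n.
by move: (H k); rewrite k1 kn pk => /(_ isT).
Qed.

Definition ismax x j := [/\ 1 <= x <= n, prec x j & forall k, 1 <= k <= n -> prec k j -> k <= x].

Lemma lv_max x j : 1 <= j <= n -> ismax x j -> lv j = (lv x).+1.
Proof.
move=> j1n [x1n pxj Hx]; apply/eqP; rewrite eqn_leq lv_prec // andbT.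
rewrite (levelE j1n); apply/bigmax_leqP_seq => k; rewrite mem_iota => /andP [k1 kj] pk.
have kn : k <= n by apply: leq_trans (ltnW kj) _; case/andP: j1n; case: (j) => // j' _; rewrite add1n.
rewrite ltnS; apply: lv_mono => //.
- by apply: Hx => //; rewrite k1.
- by case/andP: x1n.
Qed.

Lemma ex_ismax j : 1 <= j <= n -> 0 < lv j -> exists x, ismax x j.
Proof.
move=> j1n lj.
have ex : exists k, (1 <= k <= n) && prec k j.
  case: (boolP (has (fun k => prec k j) (iota 1 n))).
    by case/hasP => k; rewrite mem_iota add1n ltnS => kr pk; exists k; rewrite kr.
  move/hasPn => H; move: lj; rewrite lv_nopred //.
  by move=> k /andP [k1 kn]; apply: H; rewrite mem_iota add1n ltnS k1.
have bnd : forall k, (1 <= k <= n) && prec k j -> k <= n by move=> k /andP [/andP [_ ->]].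
case: (ex_maxnP ex bnd) => x /andP [x1n pxj] Hx; exists x; split => //.
by move=> k k1n pk; apply: Hx; rewrite k1n.
Qed.


Definition I2 (L : seq nat) := {in L &, forall x y, lv x = lv y -> x < y -> index x L < index y L}.
Definition I3 (L : seq nat) := {in L &, forall x y, lv y = (lv x).+1 -> (index x L < index y L) = prec x y}.
Definition I4 (L : seq nat) := forall x y z, x \in L -> y \in L -> z \in L -> ismax x y ->
  index x L < index z L -> index z L < index y L -> lv y <= lv z.
Definition inv m L := [/\ perm_eq L (iota 1 m), I2 L, I3 L & I4 L].

Lemma memL m L y : perm_eq L (iota 1 m) -> (y \in L) = (1 <= y <= m).
Proof. by move/perm_mem => ->; rewrite mem_iota add1n ltnS. Qed.

Lemma I2_le L x y : uniq L -> I2 L -> x \in L -> y \in L -> lv x = lv y ->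
  (index x L <= index y L) = (x <= y).
Proof.
move=> uL h2 xL yL lxy; case: (ltngtP x y) => [xy|yx|->]; last by rewrite leqnn.
- by rewrite ltnW // h2.
- by apply/negbTE; rewrite -ltnNge h2.
Qed.

Lemma cnt_take m L e : m <= n -> perm_eq L (iota 1 m) -> I2 L -> e \in L ->
  count (fun y => lv y == lv e) (take (index e L).+1 L) =
  count (fun y => (y <= e) && (lv y == lv e)) (iota 1 n).
Proof.
move=> mn pL h2 eL; have uL : uniq L by rewrite (perm_uniq pL) iota_uniq.
rewrite -!size_filter; apply: perm_size; apply: uniq_perm.
- by apply: filter_uniq; apply: take_uniq.
- by apply: filter_uniq; apply: iota_uniq.
move=> y; rewrite !mem_filter mem_iota add1n ltnS.
have e1m : 1 <= e <= m by rewrite -(memL _ pL).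
case: (boolP (y \in L)) => yL.
- rewrite in_take // ltnS.
  have y1m : 1 <= y <= m by rewrite -(memL _ pL).
  case: (eqVneq (lv y) (lv e)) => [lye|nlye]; last by rewrite /= !andbF.
  rewrite (I2_le uL h2 yL eL lye) /=.
  case/andP: y1m => -> ym /=; rewrite andbT (leq_trans ym mn) andbT //.
- have -> : (y \in take (index e L).+1 L) = false by apply/negP => /mem_take; apply/negP.
  rewrite andbF; move: yL; rewrite (memL _ pL).
  case: (boolP (y <= e)) => ye /=; last by [].
  case/andP: e1m => _ em /negbTE yn.
  case: (lv y == lv e) => //=.
  by move: yn; case: (0 < y) => //=; rewrite (leq_trans ye em).
Qed.

Lemma occ_endP a w t : t < size w -> nth 0 w t = a ->
  occ_end a (count (pred1 a) (take t w)).+1 w = t.+1.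
Proof.
elim: w t => [|x w IH] [|t] //=.
- by move=> _ ->; rewrite eqxx; change (1 - true) with (1 - 1); rewrite subnn; case: w {IH}.
- rewrite ltnS => tw ht; rewrite -addnS addKn IH //.
Qed.


Definition stepP (L : seq nat) (j : nat) : nat :=
  occ_end (lv j).-1 (Ccount n prec j) (map lv L) +
  find (predC1 (lv j)) (drop (occ_end (lv j).-1 (Ccount n prec j) (map lv L)) (map lv L)).
Definition stepL L j := take (stepP L j) L ++ j :: drop (stepP L j) L.
Definition Lword m := foldl stepL [::] (iota 1 m).

Lemma map_stepL L j : map lv (stepL L j) = insert_step (map lv L) (lv j) (Ccount n prec j).
Proof. by rewrite /stepL map_cat map_take /= map_drop. Qed.

Lemma map_Lword m : map lv (Lword m) = qword_upto n prec m.
Proof.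
elim: m => // m IH.
rewrite /Lword /qword_upto -[m.+1]addn1 iotaD !foldl_cat /= map_stepL.
by rewrite -/(Lword m) IH.
Qed.

Definition sh p t := if t < p then t else t.+1.

Lemma sh_lt p s t : (sh p s < sh p t) = (s < t).
Proof.
rewrite /sh; case: (ltnP s p) => sp; case: (ltnP t p) => tp //.
- by rewrite ltnS (leq_trans (ltnW sp) tp) (leq_trans sp tp).
- have ts : t <= s := ltnW (leq_trans tp sp).
  by rewrite !ltnNge ts (leq_trans ts (leqnSn s)).
Qed.

Lemma sh_ltp p s : (sh p s < p) = (s < p).
Proof. by rewrite /sh; case: (ltnP s p) => // sp; rewrite ltnNge (leq_trans sp (leqnSn _)). Qed.

Lemma index_ins (L : seq nat) p j y : p <= size L -> j \notin L -> y \in L ->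
  index y (take p L ++ j :: drop p L) = sh p (index y L).
Proof.
move=> pL jL yL; rewrite /sh index_cat -(in_take p yL).
have yj : y != j by apply: contraNneq jL => <-.
case: (boolP (y \in take p L)) => yt.
- by rewrite -{2}(cat_take_drop p L) index_cat yt.
- rewrite /= eq_sym (negbTE yj) size_takel // -{2}(cat_take_drop p L) index_cat (negbTE yt).
  by rewrite size_takel // addnS.
Qed.

Lemma index_ins_j (L : seq nat) p j : p <= size L -> j \notin L ->
  index j (take p L ++ j :: drop p L) = p.
Proof.
move=> pL jL; rewrite index_cat.
have -> : (j \in take p L) = false by apply/negP => /mem_take; apply/negP.
by rewrite /= eqxx addn0 size_takel.
Qed.


Lemma stepP_spec m L : m < n -> inv m L ->
 [/\ stepP L m.+1 <= size L,
     forall y, y \in L -> lv y = lv m.+1 -> index y L < stepP L m.+1,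
     forall x i, ismax x m.+1 -> i \in L -> lv i = lv x -> (index i L < stepP L m.+1) = prec i m.+1 &
     forall x z, ismax x m.+1 -> z \in L -> index x L < index z L -> index z L < stepP L m.+1 ->
        lv m.+1 <= lv z].
Proof.
move=> mn [pL h2 h3 h4].
have j1n : 1 <= m.+1 <= n by rewrite ltn0Sn.
have uL : uniq L by rewrite (perm_uniq pL) iota_uniq.
have sL : size L = m by rewrite (perm_size pL) size_iota.
have Lr y : y \in L -> 1 <= y <= n /\ y < m.+1.
  rewrite (memL _ pL) => /andP [y1 ym]; split; last by rewrite ltnS.
  by rewrite y1 (leq_trans ym (ltnW mn)).
have Llv y : y \in L -> lv y <= lv m.+1.
  move=> /Lr [/andP [y1 yn] yj]; apply: lv_mono => //; exact: ltnW.
have nthw k : k < size L -> nth 0 (map lv L) k = lv (nth 0 L k) by move=> kL; rewrite (nth_map 0).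
case: (posnP (lv m.+1)) => [lj0 | ljpos].
  have Cc0 : Ccount n prec m.+1 = 0.
    apply/eqP; rewrite -[_ == 0]negbK -lt0n -has_count; apply/hasPn => k.
    rewrite mem_iota add1n ltnS => kr; apply/negP => /andP [pk _].
    by have := lv_prec kr j1n pk; rewrite lj0.
  have pE : stepP L m.+1 = size L.
    have oe0 a q : occ_end a 0 q = 0 by case: q.
    rewrite /stepP Cc0 !oe0 add0n drop0 hasNfind ?size_map //.
    apply/hasPn => a /mapP [y yL ->] /=; rewrite negbK lj0 -leqn0 -lj0; exact: Llv.
  rewrite pE; split.
  - by [].
  - by move=> y yL _; rewrite index_mem.
  - by move=> x i xm; rewrite (lv_max j1n xm) in lj0.
  - by move=> x i xm; rewrite (lv_max j1n xm) in lj0.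
case: (ex_ismax j1n ljpos) => x xm.
have lxj := lv_max j1n xm.
case: (xm) => x1n pxj xmax.
have xL : x \in L by rewrite (memL _ pL); case/andP: (x1n) => -> _ /=; rewrite -ltnS (H1 x1n j1n pxj).
have ixL : index x L < size L by rewrite index_mem.
have Cc : Ccount n prec m.+1 = (count (pred1 (lv x)) (take (index x L) (map lv L))).+1.
  rewrite -map_take count_map.
  have := cnt_take (ltnW mn) pL h2 xL; rewrite (take_nth 0 ixL) nth_index //.
  rewrite -cats1 count_cat /= eqxx addn1 => E.
  rewrite (eq_count (a2 := fun y => lv y == lv x)) // E.
  rewrite /Ccount lxj /=; apply: eq_in_count => k; rewrite mem_iota add1n ltnS => kr /=.
  congr andb; apply/idP/idP; first by apply: xmax.
  case/andP: kr => k1 _ kx; apply: (H2 (i:=x)) => //; by case/andP: x1n.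
have p0E : occ_end (lv m.+1).-1 (Ccount n prec m.+1) (map lv L) = (index x L).+1.
  by rewrite Cc lxj /= occ_endP ?size_map // nthw // nth_index.
set d := drop (index x L).+1 (map lv L).
have pE : stepP L m.+1 = (index x L).+1 + find (predC1 (lv m.+1)) d by rewrite /stepP p0E.
have run z : z \in L -> index x L < index z L -> index z L < stepP L m.+1 -> lv z = lv m.+1.
  move=> zL xz; rewrite pE -(subnKC xz) ltn_add2l => zf.
  have := before_find 0 zf; rewrite /d nth_drop subnKC // nthw ?index_mem // nth_index //=.
  by move/negbFE/eqP.
have stop z : z \in L -> index x L < index z L -> lv z != lv m.+1 -> stepP L m.+1 <= index z L.
  move=> zL xz nz; rewrite leqNgt; apply/negP => zp; move/eqP: nz; apply; exact: run.
have xuniq x' : ismax x' m.+1 -> x' = x.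
  case=> x'1n px' x'max; apply/eqP; rewrite eqn_leq (xmax _ x'1n px') (x'max _ x1n pxj) //.
split.
- rewrite pE; have := find_size (predC1 (lv m.+1)) d; rewrite /d size_drop size_map.
  by move=> h; rewrite -(subnKC ixL) leq_add2l.
- move=> y yL lyj; case: (boolP (prec x y)) => pxy.
  + have ymax : ismax x y.
      split => // k k1n pk; apply: xmax => //; apply: (H3 (j:=y)) => //;
        have [/andP [y1 _] yj] := Lr y yL => //; exact: ltnW.
    rewrite ltnNge; apply/negP => py.
    have pLs : stepP L m.+1 < size L by apply: leq_ltn_trans py _; rewrite index_mem.
    set z := nth 0 L (stepP L m.+1).
    have zL : z \in L by apply: mem_nth.
    have iz : index z L = stepP L m.+1 by rewrite index_uniq.
    have xz : index x L < index z L by rewrite iz pE leq_addr.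
    have lz : lv z = lv m.+1.
      move: py; rewrite leq_eqVlt => /orP [/eqP e | lt].
      * by rewrite /z e nth_index.
      * apply/eqP; rewrite eqn_leq Llv //= -lyj; apply: (h4 x y z) => //; by rewrite iz.
    have hasd : has (predC1 (lv m.+1)) d.
      rewrite has_find /d size_drop size_map -(ltn_add2l (index x L).+1) -pE subnKC //.
    have := nth_find 0 hasd; rewrite /d nth_drop -pE nthw // -/z lz /=.
    by rewrite eqxx.
  + have := h3 x y xL yL; rewrite lyj lxj => /(_ erefl); rewrite (negbTE pxy) => /negbT.
    rewrite -leqNgt => yx; rewrite pE; apply: leq_trans (leq_addr _ _); exact: leq_trans yx _.
- move=> x' i /xuniq -> iL li.
  have [i1n _] := Lr i iL.
  have -> : prec i m.+1 = (i <= x).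
    apply/idP/idP; first exact: xmax.
    case/andP: i1n => i1 _ ix; apply: (H2 (i:=x)) => //; by case/andP: x1n.
  case: (leqP i x) => ix.
  + apply: leq_ltn_trans (_ : index x L < _); first by rewrite (I2_le uL h2 iL xL li).
    by rewrite pE leq_addr.
  + apply/negbTE; rewrite -leqNgt; apply: stop => //; first by apply: h2.
    by rewrite li lxj neq_ltn ltnSn.
- move=> x' z /xuniq -> zL xz zp; rewrite (run z) //.
Qed.


Lemma step_inv m L : m < n -> inv m L -> inv m.+1 (stepL L m.+1).
Proof.
move=> mn iv; have [F1 F2 F3 F4] := stepP_spec mn iv.
case: iv => pL h2 h3 h4.
have j1n : 1 <= m.+1 <= n by rewrite ltn0Sn.
have uL : uniq L by rewrite (perm_uniq pL) iota_uniq.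
have jL : m.+1 \notin L by rewrite (memL _ pL) ltnn andbF.
have Lr y : y \in L -> 1 <= y <= n /\ y < m.+1.
  rewrite (memL _ pL) => /andP [y1 ym]; split; last by rewrite ltnS.
  by rewrite y1 (leq_trans ym (ltnW mn)).
have Llv y : y \in L -> lv y <= lv m.+1.
  move=> /Lr [/andP [y1 yn] yj]; apply: lv_mono => //; exact: ltnW.
have pS : perm_eq (stepL L m.+1) (m.+1 :: L).
  rewrite /stepL -cat1s perm_catCA /= perm_cons cat_take_drop //.
have iE y : y \in L -> index y (stepL L m.+1) = sh (stepP L m.+1) (index y L).
  by move=> yL; rewrite /stepL index_ins.
have jE : index m.+1 (stepL L m.+1) = stepP L m.+1 by rewrite /stepL index_ins_j.
split.
- apply: (perm_trans pS).
  have -> : iota 1 m.+1 = iota 1 m ++ [:: m.+1] by rewrite -[in LHS](addn1 m) iotaD add1n.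
  by rewrite perm_sym perm_catC /= perm_cons perm_sym.
- move=> x y; rewrite !(perm_mem pS) !in_cons => /orP [/eqP -> | xL] /orP [/eqP -> | yL] lxy xy.
  + by rewrite ltnn in xy.
  + by have [_ yj] := Lr y yL; rewrite ltnNge (ltnW yj) in xy.
  + by rewrite iE // jE sh_ltp F2.
  + by rewrite !iE // sh_lt h2.
- move=> x y; rewrite !(perm_mem pS) !in_cons => /orP [/eqP -> | xL] /orP [/eqP -> | yL] lxy.
  + by have := ltnSn (lv m.+1); rewrite -[X in _ < X]lxy ltnn.
  + by have := Llv y yL; rewrite lxy ltnn.
  + rewrite iE // jE sh_ltp.
    have ljp : 0 < lv m.+1 by rewrite lxy.
    have [x' xm] := ex_ismax j1n ljp.
    have lx : lv x = lv x' by apply/eqP; rewrite -eqSS -lxy (lv_max j1n xm).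
    exact: F3 xm xL lx.
  + by rewrite !iE // sh_lt h3.
- move=> x y z; rewrite !(perm_mem pS) !in_cons => /orP [/eqP -> | xL] /orP [/eqP -> | yL] /orP [/eqP -> | zL] xm.
  all: try (by case: (xm) => _ pxy _; have := H1 j1n j1n pxy; rewrite ltnn).
  all: try (by case: (xm) => _ pxy _; have [y1n yj] := Lr y yL; have := H1 j1n y1n pxy; rewrite ltnNge (ltnW yj)).
  + by rewrite jE ltnn.
  + rewrite (iE x) // (iE z) // jE sh_lt sh_ltp => xz zp; exact: F4 xm zL xz zp.
  + by move=> _ _; apply: Llv.
  + rewrite !iE // !sh_lt; exact: h4.
Qed.

Lemma Lword_inv m : m <= n -> inv m (Lword m).
Proof.
elim: m => [_|m IH mn].
  by split => //; move=> x y; rewrite in_nil.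
rewrite /Lword -[m.+1]addn1 iotaD foldl_cat /= -/(Lword m) add1n.
rewrite addn1; exact: step_inv mn (IH (ltnW mn)).
Qed.


Lemma count_le e : e <= n -> count (fun y => y <= e) (iota 1 n) = e.
Proof.
move=> en; rewrite -(subnKC en) iotaD count_cat.
rewrite (eq_in_count (a2 := predT)); last by move=> y; rewrite mem_iota add1n ltnS => /andP [_ ->].
rewrite count_predT size_iota (eq_in_count (a2 := pred0)) ?count_pred0 ?addn0 //.
by move=> y; rewrite mem_iota => /andP [ey _] /=; rewrite leqNgt -add1n ey.
Qed.

Lemma main_sec i j : 1 <= i <= n -> 1 <= j <= n ->
  prec i j = Pw (qword n prec) (finvU n (fU n prec) i) (finvU n (fU n prec) j).
Proof.
move=> i1n j1n.
have [pL h2 h3 h4] := Lword_inv (leqnn n).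
set L := Lword n in pL h2 h3 h4.
have uL : uniq L by rewrite (perm_uniq pL) iota_uniq.
have sL : size L = n by rewrite (perm_size pL) size_iota.
have wE : qword n prec = map lv L by rewrite map_Lword.
have watE e : e \in L -> wat (qword n prec) (index e L).+1 = lv e.
  by move=> eL; rewrite /wat wE /= (nth_map 0) ?index_mem // nth_index.
have fE e : e \in L -> fU n prec (index e L).+1 = e.
  move=> eL; rewrite /fU /fperm watE // wE -map_take !count_map.
  have e1n : 1 <= e <= n by rewrite -(memL _ pL).
  rewrite (eq_count (a1 := preim lv (pred1 (lv e))) (a2 := fun y => lv y == lv e)) // (cnt_take (leqnn n) pL h2 eL).
  rewrite (permP pL (fun y => lv y < lv e)).
  have := count_predUI (fun y => lv y < lv e) (fun y => (y <= e) && (lv y == lv e)) (iota 1 n).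
  rewrite (eq_count (a1 := predI _ _) (a2 := pred0)); last first.
    by move=> y /=; case: (ltngtP (lv y) (lv e)); rewrite ?andbF.
  rewrite count_pred0 addn0 => <-.
  case/andP: (e1n) => e1 en; rewrite -[RHS](count_le en); apply: eq_in_count => y.
  rewrite mem_iota add1n ltnS => /andP [y1 yn] /=.
  case: (leqP y e) => ye.
  - by rewrite /= orbC -leq_eqVlt lv_mono.
  - rewrite /= orbF; apply/negbTE; rewrite -leqNgt; apply: lv_mono => //; exact: ltnW.
have finvE e : 1 <= e <= n -> finvU n (fU n prec) e = (index e L).+1.
  move=> e1n; have eL : e \in L by rewrite (memL _ pL).
  have ke : index e L < n by rewrite -sL index_mem.
  rewrite /finvU; congr (_.+1); apply/eqP; rewrite eqn_leq; apply/andP; split.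
  - rewrite leqNgt; apply/negP => /(before_find 0); rewrite nth_iota // add1n fE //.
    by rewrite eqxx.
  - rewrite leqNgt; apply/negP => fk.
    have hs : has (fun a => fU n prec a == e) (iota 1 n).
      by rewrite has_find size_iota (ltn_trans fk ke).
    have := nth_find 0 hs; set a := find _ _.
    have an : a < n by rewrite (ltn_trans fk ke).
    rewrite nth_iota // add1n.
    have aL : a < size L by rewrite sL.
    rewrite -{1}(index_uniq 0 aL uL) fE ?mem_nth // => /eqP ea.
    by move: fk; rewrite -/a -ea index_uniq // ltnn.
have iL : i \in L by rewrite (memL _ pL).
have jL : j \in L by rewrite (memL _ pL).
rewrite !finvE // /Pw !watE // ltnS.
case: (boolP (prec i j)) => pij.
- have := lv_prec i1n j1n pij; case: (leqP (lv i + 2) (lv j)) => //= h lij.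
  have e : lv j = (lv i).+1 by apply/eqP; rewrite eqn_leq lij -ltnS -addn2 h.
  by rewrite e eqxx h3.
- have := lv_noprec i1n j1n pij => lji.
  have -> : (lv i + 2 <= lv j) = false by apply/negbTE; rewrite -ltnNge addn2 ltnS.
  case: (eqVneq (lv j) (lv i).+1) => //= e.
  by rewrite h3 // (negbTE pij).
Qed.

End Main.

Unset Implicit Arguments.
Set Strict Implicit.

Theorem mainTheorem5 (n : nat) (prec : rel nat) :
  is_unit_interval_order n prec ->
  forall i j : nat, (1 <= i <= n)%N -> (1 <= j <= n)%N ->
    prec i j =
    Pw (qword n prec) (finvU n (fU n prec) i) (finvU n (fU n prec) j).
Proof.
move=> [a [amono aprec]] i j i1n j1n.
apply: main_sec => //.
- move=> x y x1n y1n /(aprec x y x1n y1n) h; rewrite ltnNge; apply/negP => yx.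
  have := amono y x; case/andP: y1n => y1 _; case/andP: x1n => _ xn.
  move=> /(_ y1 yx xn) hle; lra.
- move=> x x' y x'1 x'x xn y1n pxy.
  have x1n : 1 <= x <= n by rewrite (leq_trans x'1 x'x) xn.
  have x'1n : 1 <= x' <= n by rewrite x'1 (leq_trans x'x xn).
  apply/(aprec x' y x'1n y1n); move/(aprec x y x1n y1n): pxy => h.
  have := amono x' x x'1 x'x xn; lra.
- move=> x y y' x1n y1 yy' y'n pxy.
  have y1n : 1 <= y <= n by rewrite y1 (leq_trans yy' y'n).
  have y'1n : 1 <= y' <= n by rewrite (leq_trans y1 yy') y'n.
  apply/(aprec x y' x1n y'1n); move/(aprec x y x1n y1n): pxy => h.
  have := amono y y' y1 yy' y'n; lra.
Qed.
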